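(* For any positive integer $T$, $x \in \{0,1\}^T$ and $p \in [0,1]^T$, $$\mathsf{smCE}(x,p) \le \left|\sum_{\alpha \in [0,1]} \Delta_\alpha\right| + \sum_{\alpha \in [0,1]} |\alpha - 1/2|\cdot|\Delta_\alpha|,$$ where $\Delta_\alpha = \sum_{t=1}^T (x_t - p_t)\mathbf{1}[p_t = \alpha]$.
   Context: $\mathsf{smCE}(x,p) = \sup_{f \in \mathcal{F}} \sum_{t=1}^T f(p_t)(x_t - p_t)$, where $\mathcal{F}$ is the family of $1$-Lipschitz functions from $[0,1]$ to $[-1,1]$. Sums over $\alpha \in [0,1]$ have only finitely many nonzero terms. *)

(* Defs.v *)
From mathcomp Require Import all_boot all_order all_algebra.
From mathcomp Require Import all_classical all_reals.
Set Implicit Arguments. Unset Strict Implicit. Unset Printing Implicit Defensive.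
Import Order.TTheory GRing.Theory Num.Theory.
Local Open Scope classical_set_scope.
Local Open Scope ring_scope.

Definition lip1 (R : realType) (f : R -> R) : Prop :=
  (forall a, 0 <= a <= 1 -> -1 <= f a <= 1) /\
  (forall a b, 0 <= a <= 1 -> 0 <= b <= 1 -> `|f a - f b| <= `|a - b|).

Definition smCE (R : realType) (T : nat) (x p : 'I_T -> R) : R :=
  sup [set v : R | exists f : R -> R, lip1 f /\
         v = \sum_(t < T) f (p t) * (x t - p t)].

Definition Delta (R : realType) (T : nat) (x p : 'I_T -> R) (a : R) : R :=
  \sum_(t < T | p t == a) (x t - p t).

Definition unit_itv (R : realType) : set R := [set a : R | 0 <= a <= 1].

(* Main.v *)
Require Import Defs.
From mathcomp Require Import all_boot all_order all_algebra.
From mathcomp Require Import all_classical all_reals.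
Import Order.TTheory GRing.Theory Num.Theory.
Local Open Scope classical_set_scope.
Local Open Scope ring_scope.

Section Aux.
Context {R : realType} {T : nat} {x p : 'I_T -> R}.
Hypothesis hp : forall t, 0 <= p t <= 1.

Let r := undup [seq p t | t <- enum 'I_T].

Lemma r_unit a : a \in r -> 0 <= a <= 1.
Proof. by rewrite mem_undup => /mapP [t _ ->]. Qed.

Lemma Delta0 a : a \notin r -> Delta x p a = 0.
Proof.
move=> ar; rewrite /Delta big1 // => t /eqP pt.
by exfalso; move/negP: ar; apply; rewrite mem_undup; apply/mapP; exists t; rewrite ?mem_enum.
Qed.

Lemma fs_eq (F : R -> R) : (forall a, a \notin r -> F a = 0) ->
  \sum_(a \in @unit_itv R) F a = \sum_(a <- r) F a.
Proof.
move=> F0; rewrite (fsbigE r) ?undup_uniq //.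
- rewrite big_seq_cond [RHS]big_seq; apply: eq_bigl => a.
  case: (boolP (a \in r)) => //= ar; rewrite mem_setE; exact: r_unit.
- by move=> a /= ar; exact: r_unit.
- by move=> a _; exact: F0.
Qed.

Lemma sum_decomp (f : R -> R) :
  \sum_(t < T) f (p t) * (x t - p t) = \sum_(a <- r) f a * Delta x p a.
Proof.
rewrite /Delta; under [RHS]eq_bigr do rewrite mulr_sumr.
under [RHS]eq_bigr do rewrite big_mkcond /=.
rewrite exchange_big /=; apply: eq_bigr => t _.
have tr : p t \in r by rewrite mem_undup; apply/mapP; exists t; rewrite ?mem_enum.
rewrite (bigD1_seq (p t)) ?undup_uniq //= eqxx big1 ?addr0 //.
by move=> a /negPf; rewrite eq_sym => ->.
Qed.

End Aux.

Theorem lemma6 (R : realType) (T : nat) (x p : 'I_T -> R) :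
  (0 < T)%N ->
  (forall t, x t = 0 \/ x t = 1) ->
  (forall t, 0 <= p t <= 1) ->
  smCE x p <=
    `| \sum_(a \in @unit_itv R) Delta x p a |
    + \sum_(a \in @unit_itv R) `|a - 2^-1| * `|Delta x p a|.
Proof.
move=> _ _ hp.
set r := undup [seq p t | t <- enum 'I_T].
have E2 : \sum_(a \in @unit_itv R) `|a - 2^-1| * `|Delta x p a| =
   \sum_(a <- r) `|a - 2^-1| * `|Delta x p a|.
  by apply: (fs_eq hp) => a ar; rewrite (Delta0 _ ar) normr0 mulr0.
have E1 : \sum_(a \in @unit_itv R) Delta x p a = \sum_(a <- r) Delta x p a.
  by apply: (fs_eq hp) => a ar; rewrite (Delta0 _ ar).
rewrite E1 E2.
apply: ge_sup.
  exists 0, (fun _ => 0); split.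
    split=> [a _|a b _ _]; first by rewrite lerN10 ler01.
    by rewrite subrr normr0.
  by rewrite big1 // => t _; rewrite mul0r.
move=> v [f [[fb fl] ->]]; rewrite sum_decomp.
have hh : 0 <= (2^-1 : R) <= 1.
  by rewrite invr_ge0 ler0n /= invf_le1 ?ler1n ?ltr0n.
have -> : \sum_(a <- r) f a * Delta x p a =
   f 2^-1 * \sum_(a <- r) Delta x p a + \sum_(a <- r) (f a - f 2^-1) * Delta x p a.
  by rewrite mulr_sumr -big_split /=; apply: eq_bigr => a _; rewrite mulrBl addrC subrK.
apply: lerD.
  apply: (le_trans (ler_norm _)); rewrite normrM ler_piMl //.
  by rewrite ler_norml; have /andP[-> ->] := fb _ hh.
rewrite big_seq [X in _ <= X]big_seq; apply: ler_sum => a ar.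
apply: (le_trans (ler_norm _)); rewrite normrM ler_wpM2r //.
exact: (fl a (2^-1) (r_unit hp a ar) hh).
Qed.
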